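(* Let $1\le r\le s\le t$ and let $u=ABCd$, $v=A'B'C'd'$ be vertices of $E3C(r,s,t)$ with $A\ne A'$, $B\ne B'$, $C\ne C'$ and $d\ne d'$. Then there exist $2r+2$ pairwise internally disjoint $u$–$v$ paths in $E3C(r,s,t)$, each of length at most $r+s+t+6$.
   Context: The exchanged 3-ary $n$-cube $E3C(r,s,t)$ ($r,s,t\ge1$, $n=r+s+t+1$): vertices are strings written $x=ABCd$ with $A\in\{0,1,2\}^r$, $B\in\{0,1,2\}^s$, $C\in\{0,1,2\}^t$, $d\in\{0,1,2\}$. Two distinct vertices $x=ABCd$, $y=A'B'C'd'$ are adjacent iff one of: (E0) $A=A',B=B',C=C'$ and $d\ne d'$; (E1) $d=d'=0$, $A=A'$, $B=B'$ and $C,C'$ differ in exactly one position; (E2) $d=d'=1$, $A=A'$, $C=C'$ and $B,B'$ differ in exactly one position; (E3) $d=d'=2$, $B=B'$, $C=C'$ and $A,A'$ differ in exactly one position. Paths are internally disjoint if they share no vertices other than their endpoints; length = number of edges. *)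

(* Defs.v *)
From mathcomp Require Import all_boot.
Set Implicit Arguments. Unset Strict Implicit. Unset Printing Implicit Defensive.

Definition word (k : nat) := k.-tuple 'I_3.
Definition vertex (r s t : nat) : Type := (word r * word s * word t * 'I_3)%type.

Definition vA r s t (x : vertex r s t) : word r := x.1.1.1.
Definition vB r s t (x : vertex r s t) : word s := x.1.1.2.
Definition vC r s t (x : vertex r s t) : word t := x.1.2.
Definition vd r s t (x : vertex r s t) : 'I_3 := x.2.

Definition hamming k (X Y : word k) : nat :=
  count (fun p => p.1 != p.2) (zip (tval X) (tval Y)).

Definition differ_one k (X Y : word k) : bool := hamming X Y == 1.

Definition e3c_adj r s t (x y : vertex r s t) : bool :=
  [|| [&& vA x == vA y, vB x == vB y, vC x == vC y & vd x != vd y],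
      [&& vd x == 0 :> nat, vd y == 0 :> nat, vA x == vA y, vB x == vB y
          & differ_one (vC x) (vC y)],
      [&& vd x == 1 :> nat, vd y == 1 :> nat, vA x == vA y, vC x == vC y
          & differ_one (vB x) (vB y)]
    | [&& vd x == 2 :> nat, vd y == 2 :> nat, vB x == vB y, vC x == vC y
          & differ_one (vA x) (vA y)]].

Definition is_path r s t (u v : vertex r s t) (p : seq (vertex r s t)) : Prop :=
  [/\ p != [::], head u p = u, last u p = v, uniq p & path (@e3c_adj r s t) u (behead p)].

Definition path_length T (p : seq T) : nat := (size p).-1.

Definition interior T (p : seq T) : seq T := drop 1 (take (size p).-1 p).

Definition int_disjoint (T : eqType) (p q : seq T) : bool :=
  all (fun x => x \notin interior q) (interior p).

(* Main.v *)
Require Import Defs.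
From mathcomp Require Import all_boot zify.
Set Implicit Arguments. Unset Strict Implicit. Unset Printing Implicit Defensive.

Definition shd (X Y : seq 'I_3) : nat := count (fun p : 'I_3 * 'I_3 => p.1 != p.2) (zip X Y).

Lemma shd_cons x y X Y : shd (x :: X) (y :: Y) = (x != y) + shd X Y.
Proof. by []. Qed.

Lemma shd_refl X : shd X X = 0.
Proof. by elim: X => //= x X IH; rewrite /shd /= eqxx /= -/(shd X X) IH. Qed.

Lemma shd_sym X Y : shd X Y = shd Y X.
Proof.
elim: X Y => [|x X IH] [|y Y] //=.
by rewrite !shd_cons IH eq_sym.
Qed.

Fixpoint hp (X Y : seq 'I_3) : seq (seq 'I_3) :=
  match X, Y with
  | x :: X', y :: Y' => if x == y then map (cons x) (hp X' Y')
                        else (y :: X') :: map (cons y) (hp X' Y')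
  | _, _ => [::]
  end.

Lemma cons_inj (x : 'I_3) : injective (cons x).
Proof. by move=> a b [] . Qed.

Definition hpf X Y := X :: hp X Y.
Arguments hpf : simpl never.

Definition hrel := fun W W' : seq 'I_3 => shd W W' == 1.

Lemma hp_last X Y : size X = size Y -> last X (hp X Y) = Y.
Proof.
elim: X Y => [|x X IH] [|y Y] //= [] /IH e.
case: eqP => [->|_] /=; first by rewrite last_map e.
by rewrite last_map e.
Qed.

Lemma hp_path X Y : path hrel X (hp X Y).
Proof.
elim: X Y => [|x X IH] [|y Y] //=.
case: eqP => [->|ne] /=.
  rewrite path_map. apply: sub_path (IH Y) => a b.
  by rewrite /hrel /= shd_cons eqxx.
rewrite /hrel shd_cons shd_refl addn0.
have -> : (x != y) = true by apply/eqP.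
rewrite /= path_map. apply: sub_path (IH Y) => a b.
by rewrite /hrel /= shd_cons eqxx.
Qed.

Lemma hp_sizes X Y : all (fun W => size W == size X) (hp X Y).
Proof.
elim: X Y => [|x X IH] [|y Y] //=.
have H : all (fun W => size W == (size X).+1) (map (cons x) (hp X Y)).
  by rewrite all_map; apply: sub_all (IH Y) => W /=.
case: eqP => [->|_] /=; first by rewrite all_map; apply: sub_all (IH Y) => W /=.
by rewrite eqxx /= all_map; apply: sub_all (IH Y) => W /=.
Qed.

Lemma hpf_sizes X Y : all (fun W => size W == size X) (hpf X Y).
Proof. by rewrite /= eqxx hp_sizes. Qed.

Lemma hpf_uniq X Y : uniq (hpf X Y).
Proof.
rewrite /hpf.
elim: X Y => [|x X IH] [|y Y] //=.
move: (IH Y) => /= /andP [nin u].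
case: eqP => [->|ne] /=.
  rewrite (mem_map (@cons_inj y)) nin /= map_inj_uniq //; exact: cons_inj.
rewrite inE negb_or (mem_map (@cons_inj y)) nin map_inj_uniq; last exact: cons_inj.
rewrite u !andbT; apply/andP; split.
  by apply/eqP => -[] /esym /eqP; rewrite eq_sym => /eqP.
by apply/mapP => -[W _] [] /esym /eqP; rewrite eq_sym => /eqP.
Qed.

Lemma size_hp X Y : size (hp X Y) <= size X.
Proof.
elim: X Y => [|x X IH] [|y Y] //=.
by case: eqP => _ /=; rewrite size_map; move: (IH Y); lia.
Qed.

Definition bump (x : 'I_3) (b : bool) : 'I_3 := inord ((x + 1 + b) %% 3).

Lemma bump_neq x b : bump x b != x.
Proof.
apply/eqP => /(congr1 (@nat_of_ord 3)); rewrite /bump inordK; last by rewrite ltn_mod.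
move: (ltn_ord x); case: b => /=; lia.
Qed.

Lemma bump_inj x b b' : bump x b = bump x b' -> b = b'.
Proof.
move/(congr1 (@nat_of_ord 3)); rewrite /bump !inordK ?ltn_mod //.
move: (ltn_ord x); case: b; case: b' => //=; lia.
Qed.

Definition flip (W : seq 'I_3) (i : nat) : seq 'I_3 :=
  set_nth ord0 W i./2 (bump (nth ord0 W i./2) (odd i)).

Lemma size_flip W i : i./2 < size W -> size (flip W i) = size W.
Proof. by move=> h; rewrite /flip size_set_nth; apply/maxn_idPr. Qed.

Lemma shd_set_nth W k v : k < size W -> shd W (set_nth ord0 W k v) = (nth ord0 W k != v).
Proof.
elim: W k => [|w W IH] [|k] //= h.
  by rewrite shd_cons shd_refl addn0.
by rewrite shd_cons eqxx IH.
Qed.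

Lemma shd_flip W i : i./2 < size W -> shd W (flip W i) = 1.
Proof. by move=> h; rewrite shd_set_nth // eq_sym bump_neq. Qed.

Lemma flip_neq W i : i./2 < size W -> flip W i != W.
Proof. by move=> h; apply/eqP => e; move: (shd_flip h); rewrite e shd_refl. Qed.

Lemma flip_inj W i j : i./2 < size W -> j./2 < size W -> flip W i = flip W j -> i = j.
Proof.
move=> hi hj e.
have := congr1 (nth ord0 ^~ i./2) e; rewrite /flip !nth_set_nth /= eqxx.
case: eqP => [ej|nej].
  rewrite ej => /bump_inj eo.
  by rewrite -[i]odd_double_half -[j]odd_double_half ej eo.
by move=> eb; move: (bump_neq (nth ord0 W i./2) (odd i)); rewrite eb eqxx.
Qed.

Definition sv := (seq 'I_3 * seq 'I_3 * seq 'I_3 * nat)%type.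

Definition sadj (x y : sv) : bool :=
  [|| [&& x.1 == y.1, x.2 != y.2, x.2 < 3 & y.2 < 3],
      [&& x.2 == 0, y.2 == 0, x.1.1.2 == y.1.1.2, x.1.2 == y.1.2 & shd x.1.1.1 y.1.1.1 == 1],
      [&& x.2 == 1, y.2 == 1, x.1.1.1 == y.1.1.1, x.1.2 == y.1.2 & shd x.1.1.2 y.1.1.2 == 1]
    | [&& x.2 == 2, y.2 == 2, x.1.1.1 == y.1.1.1, x.1.1.2 == y.1.1.2 & shd x.1.2 y.1.2 == 1]].

Lemma path_cons1 x w rest : sadj x w -> path sadj w rest -> path sadj x (w :: rest).
Proof. by move=> /= -> ->. Qed.

Lemma seg_path (f : seq 'I_3 -> sv) X Y x rest : size X = size Y ->
  (forall W W', shd W W' = 1 -> sadj (f W) (f W')) -> sadj x (f X) ->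
  path sadj (f Y) rest -> path sadj x (map f (hpf X Y) ++ rest).
Proof.
move=> sz hf hx hr; rewrite /hpf map_cons cat_cons /= hx /= cat_path.
rewrite last_map hp_last // hr andbT path_map.
by apply: sub_path (hp_path X Y) => a b /eqP /hf.
Qed.

Definition ws (P Q R : seq 'I_3) (x : sv) : bool :=
  [&& size x.1.1.1 == size P, size x.1.1.2 == size Q, size x.1.2 == size R & x.2 < 3].

Lemma all_seg (p : pred sv) (f : seq 'I_3 -> sv) X Y :
  (forall W, size W == size X -> p (f W)) -> all p (map f (hpf X Y)).
Proof. by move=> h; rewrite all_map; apply: sub_all (hpf_sizes X Y) => W /h. Qed.

Definition mainb (P Q R P' Q' R' : seq 'I_3) (i : nat) : seq sv :=
  [:: (flip P i, Q, R, 0)] ++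
  map (fun W => (flip P i, W, R, 1)) (hpf Q (flip Q' i)) ++
  map (fun W => (flip P i, flip Q' i, W, 2)) (hpf R R') ++
  map (fun W => (W, flip Q' i, R', 0)) (hpf (flip P i) P') ++
  [:: (P', flip Q' i, R', 1)].

Definition e1b (P Q R P' Q' R' : seq 'I_3) : seq sv :=
  map (fun W => (P, W, R, 1)) (hpf Q Q') ++
  map (fun W => (W, Q', R, 0)) (hpf P P') ++
  map (fun W => (P', Q', W, 2)) (hpf R R').

Definition e2b (P Q R P' Q' R' : seq 'I_3) : seq sv :=
  map (fun W => (P, Q, W, 2)) (hpf R R') ++
  map (fun W => (P, W, R', 1)) (hpf Q Q') ++
  map (fun W => (W, Q', R', 0)) (hpf P P').

Ltac dm H := repeat first
 [ match type of H with
   | is_true (_ \in map _ _) => let W := fresh "W" in case/mapP: H => W _ H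
   | is_true (_ || _) => case/orP: H => H
   | is_true (_ == _) => move/eqP: H => H
   end
 | progress rewrite ?mem_cat ?mem_seq1 in H ].

Ltac dj := let x := fresh "x" in let H1 := fresh "H" in let H2 := fresh "H" in
  move=> x H1 H2; dm H1; dm H2; subst; simpl in *; congruence.

Ltac uq_goal :=
  match goal with
  | |- is_true (uniq [:: _]) => by []
  | |- is_true (uniq (map _ (hpf _ _))) =>
      by rewrite map_inj_uniq ?hpf_uniq // => ? ? []
  | |- is_true (~~ has _ _) =>
      let y := fresh "y" in let H1 := fresh "H" in let H2 := fresh "H" in
      apply/hasPn => y H2; apply/negP => H1; dm H1; dm H2; subst; simpl in *; congruence
  | |- is_true (_ \notin _) =>
      let H1 := fresh "H" in apply/negP => H1; dm H1; subst; simpl in *; congruence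
  end.

Ltac uqr := first [ uq_goal | apply/andP; split; uqr ].
Lemma all_cons1 T (p : pred T) x s : all p (x :: s) = p x && all p s.
Proof. by []. Qed.

Ltac wsr tac := repeat match goal with
  | |- is_true (all _ (map _ (hpf _ _))) =>
        apply: all_seg => ?; rewrite /ws /= => /eqP ->; by tac
  | |- is_true (all _ (_ ++ _)) => rewrite all_cat
  | |- is_true (all _ (_ :: _)) => rewrite all_cons1
  | |- is_true (all _ [::]) => done
  | |- is_true true => done
  | |- is_true (_ && _) => apply/andP; split
  | |- is_true (ws _ _ _ _) => rewrite /ws /=; by tac
  end.
Ltac uq := rewrite -?catA cons_uniq ?cat_uniq; uqr.


Lemma main_facts (P Q R P' Q' R' : seq 'I_3) (m i : nat) :
  size P = size P' -> size Q = size Q' -> size R = size R' ->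
  P <> P' -> Q <> Q' -> R <> R' -> m <= size P -> m <= size Q -> i < m.*2 ->
  let u := (P, Q, R, 0) in let v := (P', Q', R', 1) in
  let b := mainb P Q R P' Q' R' i in
  [/\ path sadj u (b ++ [:: v]), uniq (u :: b ++ [:: v]),
      all (ws P Q R) (u :: b ++ [:: v]) & size b <= size P + size Q + size R + 5].
Proof.
move=> sP sQ sR nP nQ nR mP mQ im u v b.
have hP : i./2 < size P by move: mP im; lia.
have hQ : i./2 < size Q' by move: mQ im sQ; lia.
have fP : flip P i <> P by apply/eqP/flip_neq.
have fQ : flip Q' i <> Q' by apply/eqP/flip_neq.
have sfP := size_flip hP. have sfQ := size_flip hQ.
split.
- rewrite /b /mainb -!catA.
  apply: path_cons1.
    by rewrite /sadj /= !eqxx shd_flip //= !orbT.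
  apply: seg_path; first by rewrite sfQ.
    by move=> W W' h; rewrite /sadj /= !eqxx h !orbT.
    by rewrite /sadj /= !eqxx.
  apply: seg_path => //.
    by move=> W W' h; rewrite /sadj /= !eqxx h !orbT.
    by rewrite /sadj /= !eqxx.
  apply: seg_path; first by rewrite sfP.
    by move=> W W' h; rewrite /sadj /= !eqxx h !orbT.
    by rewrite /sadj /= !eqxx.
  apply: path_cons1; first by rewrite /sadj /= !eqxx.
  by rewrite /= /sadj /= !eqxx shd_sym shd_flip // !orbT.
- rewrite /u /v /b /mainb. uq.
- rewrite /u /v /b /mainb -!catA.
  wsr ltac:(rewrite ?sfP ?sfQ ?sP ?sQ ?sR ?eqxx).
  rewrite /b /mainb /hpf !size_cat !size_map /=.
  move: (size_hp Q (flip Q' i)) (size_hp R R') (size_hp (flip P i) P'); rewrite sfP; lia.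
Qed.

Lemma e1_facts (P Q R P' Q' R' : seq 'I_3) :
  size P = size P' -> size Q = size Q' -> size R = size R' ->
  P <> P' -> Q <> Q' -> R <> R' ->
  let u := (P, Q, R, 0) in let v := (P', Q', R', 1) in
  [/\ path sadj u (e1b P Q R P' Q' R' ++ [:: v]), uniq (u :: e1b P Q R P' Q' R' ++ [:: v]),
      all (ws P Q R) (u :: e1b P Q R P' Q' R' ++ [:: v]) &
      size (e1b P Q R P' Q' R') <= size P + size Q + size R + 5].
Proof.
move=> sP sQ sR nP nQ nR u v.
split.
- rewrite /e1b -!catA.
  apply: seg_path => //; first by move=> W W' h; rewrite /sadj /= !eqxx h !orbT.
    by rewrite /sadj /= !eqxx.
  apply: seg_path => //; first by move=> W W' h; rewrite /sadj /= !eqxx h !orbT.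
    by rewrite /sadj /= !eqxx.
  apply: seg_path => //; first by move=> W W' h; rewrite /sadj /= !eqxx h !orbT.
    by rewrite /sadj /= !eqxx.
  by rewrite /= /sadj /= !eqxx.
- rewrite /u /v /e1b. uq.
- rewrite /u /v /e1b -!catA.
  wsr ltac:(rewrite ?sP ?sQ ?sR ?eqxx).
- rewrite /e1b /hpf !size_cat !size_map /=.
  move: (size_hp Q Q') (size_hp R R') (size_hp P P'); lia.
Qed.

Lemma e2_facts (P Q R P' Q' R' : seq 'I_3) :
  size P = size P' -> size Q = size Q' -> size R = size R' ->
  P <> P' -> Q <> Q' -> R <> R' ->
  let u := (P, Q, R, 0) in let v := (P', Q', R', 1) in
  [/\ path sadj u (e2b P Q R P' Q' R' ++ [:: v]), uniq (u :: e2b P Q R P' Q' R' ++ [:: v]),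
      all (ws P Q R) (u :: e2b P Q R P' Q' R' ++ [:: v]) &
      size (e2b P Q R P' Q' R') <= size P + size Q + size R + 5].
Proof.
move=> sP sQ sR nP nQ nR u v.
split.
- rewrite /e2b -!catA.
  apply: seg_path => //; first by move=> W W' h; rewrite /sadj /= !eqxx h !orbT.
    by rewrite /sadj /= !eqxx.
  apply: seg_path => //; first by move=> W W' h; rewrite /sadj /= !eqxx h !orbT.
    by rewrite /sadj /= !eqxx.
  apply: seg_path => //; first by move=> W W' h; rewrite /sadj /= !eqxx h !orbT.
    by rewrite /sadj /= !eqxx.
  by rewrite /= /sadj /= !eqxx.
- rewrite /u /v /e2b. uq.
- rewrite /u /v /e2b -!catA.
  wsr ltac:(rewrite ?sP ?sQ ?sR ?eqxx).
- rewrite /e2b /hpf !size_cat !size_map /=.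
  move: (size_hp Q Q') (size_hp R R') (size_hp P P'); lia.
Qed.

Definition sdisj (b1 b2 : seq sv) := forall x, x \in b1 -> x \in b2 -> False.

Lemma disj_facts (P Q R P' Q' R' : seq 'I_3) (m : nat) :
  size P = size P' -> size Q = size Q' -> size R = size R' ->
  P <> P' -> Q <> Q' -> R <> R' -> m <= size P -> m <= size Q ->
  [/\ forall i j, i < m.*2 -> j < m.*2 -> i <> j ->
        sdisj (mainb P Q R P' Q' R' i) (mainb P Q R P' Q' R' j),
      forall i, i < m.*2 -> sdisj (mainb P Q R P' Q' R' i) (e1b P Q R P' Q' R'),
      forall i, i < m.*2 -> sdisj (mainb P Q R P' Q' R' i) (e2b P Q R P' Q' R') &
      sdisj (e1b P Q R P' Q' R') (e2b P Q R P' Q' R')].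
Proof.
move=> sP sQ sR nP nQ nR mP mQ.
have hP : forall i, i < m.*2 -> i./2 < size P by move=> i; move: mP; lia.
have hQ : forall i, i < m.*2 -> i./2 < size Q' by move=> i; move: mQ sQ; lia.
have fP : forall i, i < m.*2 -> flip P i <> P by move=> i /hP h; apply/eqP/flip_neq.
have fQ : forall i, i < m.*2 -> flip Q' i <> Q' by move=> i /hQ h; apply/eqP/flip_neq.
split.
- move=> i j hi hj ij.
  have fPij : flip P i <> flip P j by move=> /(flip_inj (hP _ hi) (hP _ hj)).
  have fQij : flip Q' i <> flip Q' j by move=> /(flip_inj (hQ _ hi) (hQ _ hj)).
  move: (fP _ hi) (fQ _ hi) (fP _ hj) (fQ _ hj) => *.
  rewrite /mainb; dj.
- move=> i hi; move: (fP _ hi) (fQ _ hi) => *; rewrite /mainb /e1b; dj.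
- move=> i hi; move: (fP _ hi) (fQ _ hi) => *; rewrite /mainb /e2b; dj.
- rewrite /e1b /e2b; dj.
Qed.

Definition co r s t (x : vertex r s t) (k : nat) : seq 'I_3 :=
  if k == 0 then tval (vC x) else if k == 1 then tval (vB x) else tval (vA x).
Definition lens (r s t k : nat) := if k == 0 then t else if k == 1 then s else r.
Definition tup n (w : seq 'I_3) : n.-tuple 'I_3 := insubd (nseq_tuple n ord0) w.
Definition lvl (a b l : nat) := if l == 0 then a else if l == 1 then b else 3 - a - b.
Definition T3 (a b : nat) (x : sv) (k : nat) :=
  if k == a then x.1.1.1 else if k == b then x.1.1.2 else x.1.2.
Definition emb r s t (a b : nat) (x : sv) : vertex r s t :=
  (tup r (T3 a b x 2), tup s (T3 a b x 1), tup t (T3 a b x 0), inord (lvl a b x.2)).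

Lemma size_co r s t (x : vertex r s t) k : size (co x k) = lens r s t k.
Proof. by rewrite /co /lens; case: ifP => _; [|case: ifP => _]; rewrite size_tuple. Qed.

Lemma co_tup r s t (x : sv) a b k : k < 3 -> size (T3 a b x k) = lens r s t k ->
  co (emb r s t a b x) k = T3 a b x k.
Proof.
rewrite /co /emb /lens /vA /vB /vC /=.
case: k => [|[|[|]]] //= _ h; by rewrite insubdK // unfold_in /= h.
Qed.

Lemma vert_eq r s t (X Y : vertex r s t) :
  (forall k, k < 3 -> co X k = co Y k) -> vd X = vd Y -> X = Y.
Proof.
case: X => [[[A B] C] d]; case: Y => [[[A' B'] C'] d'] h /= ->.
move: (h 0 erefl) (h 1 erefl) (h 2 erefl); rewrite /co /vA /vB /vC /= => /val_inj -> /val_inj -> /val_inj -> //.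
Qed.

Lemma adj_lvl r s t (X Y : vertex r s t) :
  (forall k, k < 3 -> co X k = co Y k) -> vd X != vd Y -> e3c_adj X Y.
Proof.
case: X => [[[A B] C] d]; case: Y => [[[A' B'] C'] d'] h /= nd.
move: (h 0 erefl) (h 1 erefl) (h 2 erefl); rewrite /co /vA /vB /vC /= => /val_inj -> /val_inj -> /val_inj ->.
by rewrite /e3c_adj /vA /vB /vC /vd /= !eqxx nd.
Qed.

Lemma adj_move r s t (X Y : vertex r s t) k : k < 3 ->
  val (vd X) = k -> val (vd Y) = k ->
  (forall j, j < 3 -> j != k -> co X j = co Y j) -> shd (co X k) (co Y k) = 1 ->
  e3c_adj X Y.
Proof.
case: X => [[[A B] C] d]; case: Y => [[[A' B'] C'] d'] hk /= hd hd' h.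
rewrite /e3c_adj /vA /vB /vC /vd /differ_one /hamming /= hd hd'.
clear hd hd'; case: k hk h => [|[|[|]]] //= _ h.
- move: (h 1 erefl erefl) (h 2 erefl erefl); rewrite /co /vA /vB /vC /= => /val_inj -> /val_inj ->; rewrite /shd => ->.
  by rewrite !eqxx orbT.
- move: (h 0 erefl erefl) (h 2 erefl erefl); rewrite /co /vA /vB /vC /= => /val_inj -> /val_inj ->; rewrite /shd => ->.
  by rewrite !eqxx !orbT.
- move: (h 0 erefl erefl) (h 1 erefl erefl); rewrite /co /vA /vB /vC /= => /val_inj -> /val_inj ->; rewrite /shd => ->.
  by rewrite !eqxx !orbT.
Qed.

Lemma abc a b : a < 3 -> b < 3 -> a != b ->
  [/\ 3 - a - b < 3, 3 - a - b != a, 3 - a - b != b &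
      forall k, k < 3 -> [|| k == a, k == b | k == 3 - a - b]].
Proof.
by case: a => [|[|[|a]]] //; case: b => [|[|[|b]]] //= _ _ _; split => // -[|[|[|k]]].
Qed.

Lemma lvl_lt a b l : a < 3 -> b < 3 -> a != b -> l < 3 -> lvl a b l < 3.
Proof. by move=> ha hb ab _; case: (abc ha hb ab) => h _ _ _; rewrite /lvl; case: ifP => //; case: ifP. Qed.

Lemma lvl_inj a b l l' : a < 3 -> b < 3 -> a != b -> l < 3 -> l' < 3 -> lvl a b l = lvl a b l' -> l = l'.
Proof.
rewrite /lvl.
by case: a => [|[|[|a]]] //; case: b => [|[|[|b]]] //;
  case: l => [|[|[|l]]] //; case: l' => [|[|[|l']]].
Qed.

Lemma T3_size r s t a b (P Q R : seq 'I_3) x k :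
  a < 3 -> b < 3 -> a != b -> size P = lens r s t a -> size Q = lens r s t b ->
  size R = lens r s t (3 - a - b) -> ws P Q R x -> k < 3 -> size (T3 a b x k) = lens r s t k.
Proof.
move=> ha hb ab sP sQ sR /and4P [/eqP h1 /eqP h2 /eqP h3 _] hk.
case: (abc ha hb ab) => _ ca cb /(_ k hk).
rewrite /T3; case: eqP => [->|_] /=; first by rewrite h1.
case: eqP => [->|_] /=; first by rewrite h2.
by move/eqP => ->; rewrite h3.
Qed.

Lemma emb_vd r s t a b x : a < 3 -> b < 3 -> a != b -> x.2 < 3 ->
  val (vd (emb r s t a b x)) = lvl a b x.2.
Proof. by move=> ha hb ab hx; rewrite /vd /emb /= inordK // (lvl_lt ha hb ab hx). Qed.

Lemma emb_inj r s t a b (P Q R : seq 'I_3) x y :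
  a < 3 -> b < 3 -> a != b -> size P = lens r s t a -> size Q = lens r s t b ->
  size R = lens r s t (3 - a - b) -> ws P Q R x -> ws P Q R y ->
  emb r s t a b x = emb r s t a b y -> x = y.
Proof.
move=> ha hb ab sP sQ sR wx wy e.
have hc : forall k, k < 3 -> T3 a b x k = T3 a b y k.
  move=> k hk; rewrite -(co_tup hk (T3_size ha hb ab sP sQ sR wx hk)).
  by rewrite -(co_tup hk (T3_size ha hb ab sP sQ sR wy hk)) e.
case: (abc ha hb ab) => hc3 ca cb _.
have e1 := hc a ha; have e2 := hc b hb; have e3 := hc _ hc3.
move: e1 e2 e3; rewrite /T3 eqxx (eq_sym b a) (negbTE ab) eqxx (negbTE ca) (negbTE cb).
move: wx wy => /and4P [_ _ _ lx] /and4P [_ _ _ ly].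
have el : x.2 = y.2.
  apply: (lvl_inj ha hb ab lx ly).
  by rewrite -(@emb_vd r s t a b _ ha hb ab lx) -(@emb_vd r s t a b _ ha hb ab ly) e.
clear e hc lx ly; by case: x el => [[[x1 x2] x3] l]; case: y => [[[y1 y2] y3] l'] /= -> -> -> ->.
Qed.

Lemma emb_adj r s t a b (P Q R : seq 'I_3) x y :
  a < 3 -> b < 3 -> a != b -> size P = lens r s t a -> size Q = lens r s t b ->
  size R = lens r s t (3 - a - b) -> ws P Q R x -> ws P Q R y ->
  sadj x y -> e3c_adj (emb r s t a b x) (emb r s t a b y).
Proof.
move=> ha hb ab sP sQ sR wx wy.
have cx := fun k hk => @co_tup r s t x a b k hk (T3_size ha hb ab sP sQ sR wx hk).
have cy := fun k hk => @co_tup r s t y a b k hk (T3_size ha hb ab sP sQ sR wy hk).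
move: (wx) (wy) => /and4P [_ _ _ lx] /and4P [_ _ _ ly].
case: (abc ha hb ab) => hc3 ca cb hall.
case: x wx cx lx => [[[x1 x2] x3] l]; case: y wy cy ly => [[[y1 y2] y3] l'] /= wy cy ly wx cx lx.
rewrite /sadj /=.
case/or4P.
- case/and4P => /eqP [ex1 ex2 ex3] ll _ _; subst; apply: adj_lvl.
    by move=> k hk; rewrite cx // cy.
  apply/eqP => /(congr1 (@nat_of_ord 3)) /=.
  rewrite !inordK ?lvl_lt // => /(lvl_inj ha hb ab lx ly) /eqP.
  by rewrite (negbTE ll).
- case/and5P => /eqP el /eqP el' /eqP e2 /eqP e3 hs; subst.
  apply: (adj_move (k := a)) => //; try by rewrite emb_vd.
    move=> j hj ja; rewrite cx // cy // /T3 (negbTE ja) /=; by case: ifP.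
  by rewrite cx // cy // /T3 eqxx; apply/eqP.
- case/and5P => /eqP el /eqP el' /eqP e2 /eqP e3 hs; subst.
  apply: (adj_move (k := b)) => //; try by rewrite emb_vd.
    move=> j hj jb; rewrite cx // cy // /T3 (negbTE jb) /=; by case: ifP.
  by rewrite cx // cy // /T3 eq_sym (negbTE ab) eqxx; apply/eqP.
- case/and5P => /eqP el /eqP el' /eqP e2 /eqP e3 hs; subst.
  apply: (adj_move (k := 3 - a - b)) => //; try by rewrite emb_vd.
    move=> j hj jc; rewrite cx // cy // /T3.
    move: (hall j hj); rewrite (negbTE jc) orbF /=; by case: (j == a) => //= ->.
  by rewrite cx // cy // /T3 (negbTE ca) (negbTE cb); apply/eqP.
Qed.

Lemma interior_cat T (x y : T) b : interior (x :: b ++ [:: y]) = b.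
Proof.
rewrite /interior -cat_cons size_cat /= addn1 /= take_cat /= ltnn subnn take0 cats0.
exact: drop0.
Qed.

Lemma interior_map (T T' : Type) (f : T -> T') s : interior (map f s) = map f (interior s).
Proof. by rewrite /interior map_drop map_take size_map. Qed.

Lemma transfer_path r s t (f : sv -> vertex r s t) (p : pred sv) u' v' b :
  {in p &, injective f} -> (forall x y, p x -> p y -> sadj x y -> e3c_adj (f x) (f y)) ->
  path sadj u' (b ++ [:: v']) -> uniq (u' :: b ++ [:: v']) -> all p (u' :: b ++ [:: v']) ->
  is_path (f u') (f v') (map f (u' :: b ++ [:: v'])).
Proof.
move=> finj fadj hp hu ha; split => //.
- by rewrite map_cons last_cons map_cat last_cat.
- rewrite map_inj_in_uniq // => x y hx hy; apply: finj.
    exact: (allP ha).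
  exact: (allP ha).
- rewrite map_cons /= path_map.
  apply: (sub_in_path (P := p)) hp. move=> x y hx hy /=; exact: fadj. exact: ha.
Qed.

Lemma transfer_disj (V : eqType) (f : sv -> V) (p : pred sv) u' v' b1 b2 :
  {in p &, injective f} -> all p b1 -> all p b2 -> sdisj b1 b2 ->
  int_disjoint (map f (u' :: b1 ++ [:: v'])) (map f (u' :: b2 ++ [:: v'])).
Proof.
move=> finj h1 h2 hd; rewrite /int_disjoint !interior_map !interior_cat.
apply/allP => y /mapP [x hx ->]; apply/mapP => -[z hz] e.
have exz := finj x z (allP h1 x hx) (allP h2 z hz) e.
by subst; apply: (hd z hx hz).
Qed.

Lemma sdisj_sym b1 b2 : sdisj b1 b2 -> sdisj b2 b1.
Proof. by move=> h x h1 h2; apply: (h x). Qed.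

Lemma lens_sum r s t a b : a < 3 -> b < 3 -> a != b ->
  lens r s t a + lens r s t b + lens r s t (3 - a - b) = r + s + t.
Proof.
rewrite /lens; case: a => [|[|[|a]]] //; case: b => [|[|[|b]]] //= _ _ _; lia.
Qed.

Lemma lens_ge r s t k : r <= s -> s <= t -> r <= lens r s t k.
Proof. by rewrite /lens => h1 h2; case: ifP => _; [|case: ifP] => //; lia. Qed.

Lemma emb_co r s t (X : vertex r s t) a b l : a < 3 -> b < 3 -> a != b -> l < 3 ->
  lvl a b l = val (vd X) -> emb r s t a b (co X a, co X b, co X (3 - a - b), l) = X.
Proof.
move=> ha hb ab hl hv; case: (abc ha hb ab) => hc ca cb hall.
apply: vert_eq.
  move=> k hk; rewrite co_tup //; last first.
    rewrite /T3 /=; case: ifP => [/eqP->|na]; first exact: size_co.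
    case: ifP => [/eqP->|ne]; first exact: size_co.
    by move: (hall k hk); rewrite na ne /= => /eqP ->; exact: size_co.
  rewrite /T3 /=; case: ifP => [/eqP->|na] //; case: ifP => [/eqP->|ne] //.
  by move: (hall k hk); rewrite na ne /= => /eqP ->.
by rewrite /emb /vd /= hv inord_val.
Qed.

Definition body (P Q R P' Q' R' : seq 'I_3) (r i : nat) : seq sv :=
  if i < r.*2 then mainb P Q R P' Q' R' i
  else if i == r.*2 then e1b P Q R P' Q' R' else e2b P Q R P' Q' R'.

Theorem lemma21 (r s t : nat) (u v : vertex r s t) :
  1 <= r -> r <= s -> s <= t ->
  vA u != vA v -> vB u != vB v -> vC u != vC v -> vd u != vd v ->
  exists P : 'I_(2 * r + 2) -> seq (vertex r s t),
    (forall i, is_path u v (P i) /\ path_length (P i) <= r + s + t + 6) /\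
    (forall i j, i != j -> int_disjoint (P i) (P j)).
Proof.
move=> h1 hrs hst nA nB nC nd.
set a := val (vd u); set b := val (vd v).
have ha : a < 3 := ltn_ord _. have hb : b < 3 := ltn_ord _.
have ab : a != b by apply/eqP => /val_inj; apply/eqP.
case: (abc ha hb ab) => hc ca cb hall.
set c := 3 - a - b.
have nco : forall k, co u k <> co v k.
  move=> k; rewrite /co; case: ifP => _; first by move/val_inj; apply/eqP.
  case: ifP => _; by move/val_inj; apply/eqP.
set P := co u a; set Q := co u b; set R := co u c.
set P' := co v a; set Q' := co v b; set R' := co v c.
have sP : size P = lens r s t a := size_co _ _. have sQ : size Q = lens r s t b := size_co _ _.
have sR : size R = lens r s t c := size_co _ _.
have sP' : size P = size P' by rewrite sP size_co.
have sQ' : size Q = size Q' by rewrite sQ size_co.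
have sR' : size R = size R' by rewrite sR size_co.
have mP : r <= size P by rewrite sP lens_ge.
have mQ : r <= size Q by rewrite sQ lens_ge.
have hsum : size P + size Q + size R = r + s + t by rewrite sP sQ sR lens_sum.
have eu : emb r s t a b (P, Q, R, 0) = u by apply: emb_co.
have ev : emb r s t a b (P', Q', R', 1) = v by apply: emb_co.
have finj : {in ws P Q R &, injective (emb r s t a b)}.
  by move=> x y hx hy; apply: (emb_inj ha hb ab sP sQ sR).
have fadj : forall x y, ws P Q R x -> ws P Q R y -> sadj x y -> e3c_adj (emb r s t a b x) (emb r s t a b y).
  by move=> x y hx hy; apply: (emb_adj ha hb ab sP sQ sR).
have nP := nco a; have nQ := nco b; have nR := nco c.
have bf : forall i : 'I_(2 * r + 2),
  [/\ path sadj (P, Q, R, 0) (body P Q R P' Q' R' r i ++ [:: (P', Q', R', 1)]),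
      uniq ((P, Q, R, 0) :: body P Q R P' Q' R' r i ++ [:: (P', Q', R', 1)]),
      all (ws P Q R) ((P, Q, R, 0) :: body P Q R P' Q' R' r i ++ [:: (P', Q', R', 1)]) &
      size (body P Q R P' Q' R' r i) <= size P + size Q + size R + 5].
  move=> i; rewrite /body; case: ifP => hi.
    exact: (main_facts sP' sQ' sR' nP nQ nR mP mQ hi).
  case: ifP => _.
    exact: (e1_facts sP' sQ' sR' nP nQ nR).
  exact: (e2_facts sP' sQ' sR' nP nQ nR).
exists (fun i => map (emb r s t a b) ((P, Q, R, 0) :: body P Q R P' Q' R' r i ++ [:: (P', Q', R', 1)])).
split.
  move=> i; case: (bf i) => hp hu hw hs; split.
    by rewrite -{1}eu -{1}ev; apply: (transfer_path (p := ws P Q R)).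
  rewrite /path_length size_map /= size_cat /= addn1 /=; lia.
move=> i j ij.
case: (bf i) => _ _ hwi _; case: (bf j) => _ _ hwj _.
apply: (transfer_disj (p := ws P Q R)) => //.
- by move: hwi => /= /andP [_]; rewrite all_cat => /andP [].
- by move: hwj => /= /andP [_]; rewrite all_cat => /andP [].
have [hd1 hd2 hd3 hd4] := disj_facts sP' sQ' sR' nP nQ nR mP mQ.
have ij' : nat_of_ord i <> nat_of_ord j by move=> /val_inj /eqP; rewrite (negbTE ij).
have hi2 := ltn_ord i; have hj2 := ltn_ord j.
rewrite /body; case hi : (i < r.*2); case hj : (j < r.*2) => /=.
- by apply: hd1.
- by case: (j == r.*2 :> nat); [apply: hd2 | apply: hd3].
- by case: (i == r.*2 :> nat); apply: sdisj_sym; [apply: hd2 | apply: hd3].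
- case ei: (i == r.*2 :> nat); case ej: (j == r.*2 :> nat) => //.
  + exfalso; apply: ij'; by rewrite (eqP ei) (eqP ej).
  + by apply: sdisj_sym.
  + exfalso; apply: ij'; move: hi hj hi2 hj2 ei ej; rewrite -!muln2; lia.
Qed.
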